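(* Let $G$ be a non-complete double-critical $7$-chromatic graph and let $x$ be a vertex of degree $9$ in $G$. Then the complement $\overline{G_x}$ does not contain $K_4^-$ (the complete graph on $4$ vertices minus one edge) as a subgraph.
   Context: All graphs are finite and simple. A graph $G$ is (vertex-)critical if $\chi(G-v)<\chi(G)$ for every vertex $v\in V(G)$. A critical graph $G$ is double-critical if $\chi(G-x-y)\le\chi(G)-2$ for every edge $xy\in E(G)$. For a vertex $x$, $G_x:=G[N(x)]$ denotes the subgraph induced by the neighbourhood of $x$, and $\overline{G_x}$ its complement. *)

(* Defs.v *)
From mathcomp Require Import all_boot.
Set Implicit Arguments. Unset Strict Implicit. Unset Printing Implicit Defensive.

(* A finite simple graph: vertex type T : finType, adjacency e : rel T,
   assumed symmetric and irreflexive (hypotheses of the theorem). *)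

Definition colorableb (T : finType) (e : rel T) (S : {set T}) (k : nat) : bool :=
  [exists f : {ffun T -> 'I_k},
     [forall u in S, forall v in S, e u v ==> (f u != f v)]].

(* chromatic number of G[S]: least k such that G[S] is k-colourable
   (k = #|T| always works, so searching 0..#|T| suffices; the index found
   in iota 0 _ is the value itself) *)
Definition chi (T : finType) (e : rel T) (S : {set T}) : nat :=
  find (colorableb e S) (iota 0 #|T|.+1).

Definition complete_graph (T : finType) (e : rel T) : Prop :=
  forall u v : T, u != v -> e u v.

Definition critical (T : finType) (e : rel T) : Prop :=
  forall v : T, chi e (setT :\ v) < chi e setT.

Definition double_critical (T : finType) (e : rel T) : Prop :=
  critical e /\
  forall x y : T, e x y -> chi e (setT :\ x :\ y) <= chi e setT - 2.

Definition degree (T : finType) (e : rel T) (x : T) : nat := #|[set y | e x y]|.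

(* the complement of G_x = G[N(x)] contains K_4^- as a (not necessarily
   induced) subgraph: four distinct neighbours a,b,c,d of x such that all
   pairs except possibly {c,d} are non-adjacent in G *)
Definition compl_nbhd_has_K4minus (T : finType) (e : rel T) (x : T) : Prop :=
  exists a b c d : T,
    [/\ [/\ e x a, e x b, e x c & e x d],
        [/\ a != b, a != c, a != d & [/\ b != c, b != d & c != d]] &
        [/\ ~~ e a b, ~~ e a c, ~~ e a d, ~~ e b c & ~~ e b d]].

(* Main.v *)
Require Import Defs.
From mathcomp Require Import all_boot zify.
Set Implicit Arguments. Unset Strict Implicit. Unset Printing Implicit Defensive.

Section Aux.
Variables (T : finType) (e : rel T).
Hypothesis e_sym : symmetric e.
Hypothesis e_irr : irreflexive e.

Lemma col_all S : colorableb e S #|T|.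
Proof.
apply/existsP; exists [ffun v => enum_rank v].
apply/forallP => u; apply/implyP => _; apply/forallP => v; apply/implyP => _.
apply/implyP => huv; rewrite !ffunE; apply/eqP => /enum_rank_inj Eq.
by move: huv; rewrite Eq e_irr.
Qed.

Lemma col_mono S j k : colorableb e S j -> j <= k -> colorableb e S k.
Proof.
move=> /existsP [f Hf] jk; apply/existsP; exists [ffun v => widen_ord jk (f v)].
apply/forallP => u; apply/implyP => uS; apply/forallP => v; apply/implyP => vS.
apply/implyP => huv; rewrite !ffunE; apply/negP => /eqP Eq.
have := (forallP Hf u); rewrite uS /= => /forallP /(_ v); rewrite vS huv /=.
by rewrite (_ : f u = f v) ?eqxx //; apply: val_inj; exact: (congr1 val Eq).
Qed.

Lemma chi_spec S : colorableb e S (chi e S).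
Proof.
have hs : has (colorableb e S) (iota 0 #|T|.+1).
  apply/hasP; exists #|T|; last exact: col_all. by rewrite mem_iota add0n ltnSn.
have := nth_find 0 hs; rewrite nth_iota ?add0n //.
by rewrite -{2}(size_iota 0 #|T|.+1) -has_find.
Qed.

Lemma chi_min S j : j < chi e S -> ~~ colorableb e S j.
Proof.
move=> hj; have := before_find 0 hj; rewrite nth_iota ?add0n => [->//|].
apply: leq_trans hj _; rewrite /chi -{2}(size_iota 0 #|T|.+1); exact: find_size.
Qed.

Lemma col_chi S k : chi e S <= k -> colorableb e S k.
Proof. move=> h; exact: col_mono (chi_spec S) h. Qed.

Lemma common_nb k x y (f : {ffun T -> 'I_k}) (i : 'I_k) :
  ~~ colorableb e setT k.+1 -> e x y ->
  [forall u in setT :\ x :\ y, forall v in setT :\ x :\ y, e u v ==> (f u != f v)] ->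
  exists v, [/\ v \in setT :\ x :\ y, f v = i, e x v & e y v].
Proof.
move=> Hnc hxy Hf.
case: (boolP [exists v, [&& v \in setT :\ x :\ y, f v == i, e x v & e y v]]).
  by move=> /existsP [v /and4P [h1 /eqP h2 h3 h4]]; exists v.
move=> Hno; exfalso; move/negP: Hnc; apply.
have Nc : forall v, v != x -> v != y -> f v == i -> e x v -> e y v -> False.
  move=> v h1 h2 h3 h4 h5; move/negP: Hno; apply; apply/existsP; exists v.
  by rewrite !inE h1 h2 h3 h4 h5.
have fp : forall u v, u != x -> u != y -> v != x -> v != y -> e u v -> f u != f v.
  move=> u v h1 h2 h3 h4 h5; have := forallP Hf u; rewrite !inE h1 h2 /=.
  by move=> /forallP /(_ v); rewrite !inE h3 h4 h5.
pose c (v : T) := (f v == i) && e x v.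
pose g := [ffun v => if v == x then widen_ord (leqnSn k) i
   else if v == y then (ord_max : 'I_k.+1)
   else if c v then (ord_max : 'I_k.+1) else widen_ord (leqnSn k) (f v)].
have wne : forall (j : 'I_k), widen_ord (leqnSn k) j != (ord_max : 'I_k.+1).
  by move=> j; rewrite -val_eqE /= neq_ltn ltn_ord.
have weq : forall (j l : 'I_k), (widen_ord (leqnSn k) j == widen_ord (leqnSn k) l) = (j == l).
  by move=> j l; rewrite -!val_eqE.
have key : forall u v, e u v -> g u != g v.
  move=> u v huv; rewrite !ffunE.
  have nuv : u != v by apply/eqP => E; move: huv; rewrite E e_irr.
  case: (eqVneq u x) => [Eu|ux].
    subst u; rewrite eq_sym in nuv; rewrite (negbTE nuv).
    case: (eqVneq v y) => [_|vy]; first by rewrite wne.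
    rewrite /c huv andbT; case: ifP => hc; first by rewrite wne.
    by rewrite weq eq_sym hc.
  case: (eqVneq v x) => [Ev|vx].
    subst v; case: (eqVneq u y) => [_|uy]; first by rewrite eq_sym wne.
    rewrite /c (e_sym x u) huv andbT; case: ifP => hc; first by rewrite eq_sym wne.
    by rewrite weq hc.
  case: (eqVneq u y) => [Eu|uy].
    subst u; rewrite eq_sym in nuv; rewrite (negbTE nuv); case: ifP => hc.
      by case/andP: hc => h1 h2; exfalso; apply: (Nc v) => //; rewrite eq_sym.
    by rewrite eq_sym wne.
  case: (eqVneq v y) => [Ev|vy].
    subst v; case: ifP => hc; last by rewrite wne.
    by case/andP: hc => h1 h2; exfalso; apply: (Nc u) => //; rewrite e_sym.
  case: ifP => hcu; case: ifP => hcv.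
    case/andP: hcu => /eqP h1 _; case/andP: hcv => /eqP h2 _.
    by have := fp u v ux uy vx vy huv; rewrite h1 h2 eqxx.
  - by rewrite eq_sym wne.
  - by rewrite wne.
  - by rewrite weq; apply: fp.
apply/existsP; exists g; apply/forallP => u; apply/implyP => _.
apply/forallP => v; apply/implyP => _; apply/implyP; exact: key.
Qed.

End Aux.

Theorem proposition26 (T : finType) (e : rel T)
  (e_sym : symmetric e) (e_irr : irreflexive e)
  (Hnc : ~ complete_graph e) (Hdc : double_critical e) (H7 : chi e setT = 7)
  (x : T) (Hdeg : degree e x = 9) :
  ~ compl_nbhd_has_K4minus e x.
Proof.
move=> [a [b [c [d [[xa xb xc xd] [ab ac ad [bc bd cd]] [nab nac nad nbc nbd]]]]]].
have n6 : ~~ colorableb e setT 6 by apply: chi_min; rewrite H7.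
have Hch : forall y, e x y -> exists f : {ffun T -> 'I_5},
    [forall u in setT :\ x :\ y, forall v in setT :\ x :\ y, e u v ==> (f u != f v)].
  move=> y hy; have := (Hdc.2 x y hy); rewrite H7 => h.
  by have /existsP := col_chi e_irr h.
have ne_xv : forall v, e x v -> v != x.
  by move=> v hv; apply/eqP => E; move: hv; rewrite E e_irr.
pose W := [set v | e x v] :\ a :\ b :\ c :\ d.
have cW : #|W| = 5.
  have cD : forall (A : {set T}) z, z \in A -> #|A :\ z| = #|A| - 1.
    by move=> A z hz; rewrite (cardsD1 z A) hz add1n subn1.
  move: Hdeg; rewrite /degree /W => Hd.
  rewrite cD; last by rewrite !inE (eq_sym d c) cd (eq_sym d b) bd (eq_sym d a) ad xd.
  rewrite cD; last by rewrite !inE (eq_sym c b) bc (eq_sym c a) ac xc.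
  rewrite cD; last by rewrite !inE (eq_sym b a) ab xb.
  rewrite cD; last by rewrite !inE xa.
  by rewrite Hd.
have [fb Hfb] := Hch b xb.
pose W' := [set v in W | e b v].
have sW : W' \subset W by apply/subsetP => v; rewrite inE => /andP [].
have cov : [set: 'I_5] \subset fb @: W'.
  apply/subsetP => i _.
  have [v [h1 h2 h3 h4]] := common_nb e_sym e_irr i n6 xb Hfb.
  apply/imsetP; exists v => //.
  move: h1; rewrite !inE h3 h4 /= => /andP [vb /andP [vx _]].
  rewrite vb !andbT; apply/and3P; split.
  - by apply/eqP => E; move: h4; rewrite E (negbTE nbd).
  - by apply/eqP => E; move: h4; rewrite E (negbTE nbc).
  - by apply/eqP => E; move: h4; rewrite E e_sym (negbTE nab).
have c5 : 5 <= #|W'|.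
  have := subset_leq_card cov; rewrite cardsT card_ord => h.
  exact: leq_trans h (leq_imset_card _ _).
have EW : W \subset W'.
  have [_ E] := subset_leqif_cards sW; have : W' == W by rewrite -E eqn_leq (subset_leq_card sW) cW c5.
  by move/eqP => ->.
have [fa Hfa] := Hch a xa.
have [v [h1 h2 h3 h4]] := common_nb e_sym e_irr (fa b) n6 xa Hfa.
have vW : v \in W.
  move: h1; rewrite !inE h3 /= => /andP [va /andP [vx _]].
  rewrite va !andbT; apply/and3P; split.
  - by apply/eqP => E; move: h4; rewrite E (negbTE nad).
  - by apply/eqP => E; move: h4; rewrite E (negbTE nac).
  - by apply/eqP => E; move: h4; rewrite E (negbTE nab).
have hbv : e b v by move: (subsetP EW v vW); rewrite inE => /andP [].
have := forallP Hfa b; rewrite !inE (ne_xv b xb) eq_sym ab /=.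
move=> /forallP /(_ v); rewrite h1 hbv h2 eqxx /=.
done.
Qed.
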